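(* Let $I$ and $J$ be finite sets, $g\in\mathbb{R}^J$, and for each $i\in I$ let $u_i:\mathbb{R}^J\to\mathbb{R}\cup\{-\infty\}$ be upper semicontinuous and concave with $u_i(x_i+rg)>u_i(x_i)$ for all $x_i\in\mathrm{dom}\,u_i$ and $r>0$. Assume: (A) whenever $x\in\mathbb{R}^{I\times J}$ satisfies $u_i^\infty(x_i)\ge0$ for all $i$ and $\sum_{i}x_i=0$, then $x=0$; (B) for every $r>0$ and every $i\in I$ there exists $\delta_i>0$ with $u_i(x_i+rg)\ge u_i(x_i)+\delta_i r$ for all $x_i\in\mathbb{B}(r)$. Let $x^0\in\mathbb{R}^{I\times J}$ be an initial allocation and let $(x^t)_{t\ge0}$ be generated by repeated double auctions: for $t\ge1$, with $D^t_i(y_i):=\sup\{r\in\mathbb{R}\mid u_i(x^{t-1}_i+y_i-rg)\ge u_i(x^{t-1}_i)\}$, let $\bar x^t\in\mathbb{R}^{I\times J}$ solve ''maximize $\sum_i D^t_i(y_i)$ subject to $\sum_i y_i=0$'', let $p^t\in\mathbb{R}^J$ satisfy $p^t\in\partial D^t_i(\bar x^t_i)$ for all $i\in I$, and set $x^t_i:=x^{t-1}_i+\bar x^t_i-(p^t\cdot\bar x^t_i)g$. Then: the sequence $(x^t)$ is bounded; $CS(x^t)$ is nonincreasing in $t$ and converges to zero; there is $r>0$ such that, with $\delta_i$ the constants given by (B) for this $r$, \[ CS(x^t)\le\frac1t\sum_{i\in I}\frac{u_i(x^t_i)-u_i(x^0_i)}{\delta_i}\quad\text{for all }t\ge1;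 \] and every cluster point $\bar x$ of $(x^t)_{t=0}^\infty$ is a double auction equilibrium and individually rational. If moreover each $u_i$ satisfies: whenever $u_i(y_i)>u_i(y_i')$ for some $y_i'\in\mathrm{dom}\,u_i$, then $y_i-\varepsilon g\in\mathrm{dom}\,u_i$ for all small enough $\varepsilon>0$, then every such cluster point $\bar x$ is Pareto efficient.
   Context: $\mathrm{dom}\,u_i=\{x\mid u_i(x)>-\infty\}$; $u_i^\infty(x_i):=\inf_{\alpha>0}\frac{u_i(\bar x_i+\alpha x_i)-u_i(\bar x_i)}{\alpha}$ for any $\bar x_i\in\mathrm{dom}\,u_i$ is the recession function; $\mathbb{B}(r)$ is the closed ball of radius $r$ at the origin in $\mathbb{R}^J$; $\partial D(\bar y)$ is the superdifferential $\{p\mid D(y)\le D(\bar y)+p\cdot(y-\bar y)\ \forall y\}$. For an allocation $x$, $CS(x)$ is the optimal value of ''maximize $\sum_i D_i(y_i)$ over $y\in\mathbb{R}^{I\times J}$ subject to $\sum_i y_i=0$'' where $D_i(y_i)=\sup\{r\mid u_i(x_i+y_i-rg)\ge u_i(x_i)\}$; $x$ is a double auction equilibrium if $CS(x)=0$. An allocation $\bar x$ is individually rational if $u_i(\bar x_i)\ge u_i(x^0_i)$ for all $i$. An allocation is feasible if its total equals $\sum_i x^0_i$, and a feasible $\bar x$ is Pareto efficient if no feasible $x'$ has $u_i(x'_i)\ge u_i(\bar x_i)$ for all $i$ with strict inequality for some $i$. *)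

(* Defs.v *)
(* R : realType, finite index sets I J : finType,
   vectors of R^J are functions J -> R, allocations are functions I -> J -> R,
   utilities take values in \bar R (with +oo excluded by hypothesis). *)
From HB Require Import structures.
From mathcomp Require Import all_boot all_order all_algebra.
From mathcomp Require Import all_classical all_reals all_analysis.
Set Implicit Arguments. Unset Strict Implicit. Unset Printing Implicit Defensive.
Import Order.TTheory GRing.Theory Num.Theory.
Local Open Scope classical_set_scope.
Local Open Scope ring_scope.

Section Vec.
Context {R : realType} {J : finType}.

Definition dotp (p y : J -> R) : R := \sum_(j : J) p j * y j.

Definition sqnorm (x : J -> R) : R := \sum_(j : J) x j ^+ 2.

Definition inball (r : R) (x : J -> R) : Prop := sqnorm x <= r ^+ 2.

Definition dom (u : (J -> R) -> \bar R) : set (J -> R) :=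
  [set x | (-oo < u x)%E].

Definition usc (u : (J -> R) -> \bar R) : Prop :=
  forall (x : J -> R) (a : R), (u x < a%:E)%E ->
    exists2 e : R, 0 < e &
      forall y : J -> R, sqnorm (fun j => y j - x j) < e ^+ 2 -> (u y < a%:E)%E.

(* concavity (on the effective domain; u is -oo outside it) *)
Definition concave (u : (J -> R) -> \bar R) : Prop :=
  forall (x y : J -> R) (l : R), dom u x -> dom u y -> 0 <= l <= 1 ->
    ((l * fine (u x) + (1 - l) * fine (u y))%:E
       <= u (fun j => (l * x j + (1 - l) * y j)%R))%E.

(* recession function u^oo(x) computed at the base point xb in dom u:
   inf_{a > 0} (u(xb + a x) - u(xb)) / a *)
Definition recession (u : (J -> R) -> \bar R) (xb x : J -> R) : \bar R :=
  ereal_inf [set ((u (fun j => (xb j + a * x j)%R) - u xb) * (a^-1)%:E)%E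
            | a in [set a : R | 0 < a]].

Definition Dfun (u : (J -> R) -> \bar R) (g x y : J -> R) : \bar R :=
  ereal_sup [set r%:E | r in [set r : R |
     (u x <= u (fun j => (x j + y j - r * g j)%R))%E]].

Definition superdiff (D : (J -> R) -> \bar R) (yb p : J -> R) : Prop :=
  forall y : J -> R, (D y <= D yb + (dotp p (fun j => (y j - yb j)%R))%:E)%E.

End Vec.

Section Alloc.
Context {R : realType} {I J : finType}.

Definition CS (u : I -> (J -> R) -> \bar R) (g : J -> R) (x : I -> J -> R)
  : \bar R :=
  ereal_sup [set (\sum_(i : I) Dfun (u i) g (x i) (y i))%E
            | y in [set y : I -> J -> R | forall j, \sum_(i : I) y i j = 0]].

Definition DA_equilibrium u g (x : I -> J -> R) : Prop := CS u g x = 0%E.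

Definition individually_rational (u : I -> (J -> R) -> \bar R)
  (x0 x : I -> J -> R) : Prop := forall i, (u i (x0 i) <= u i (x i))%E.

Definition feasible (x0 x : I -> J -> R) : Prop :=
  forall j, \sum_(i : I) x i j = \sum_(i : I) x0 i j.

Definition pareto_efficient (u : I -> (J -> R) -> \bar R)
  (x0 x : I -> J -> R) : Prop :=
  feasible x0 x /\
  ~ (exists x' : I -> J -> R, feasible x0 x' /\
       (forall i, (u i (x i) <= u i (x' i))%E) /\
       (exists i, (u i (x i) < u i (x' i))%E)).

Definition cluster_point (x : nat -> I -> J -> R) (xb : I -> J -> R) : Prop :=
  forall e : R, 0 < e -> forall N : nat, exists2 t : nat, (N <= t)%N &
    forall i j, `|x t i j - xb i j| < e.

End Alloc.

(* Main.v *)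
Require Import Defs.
From HB Require Import structures.
From mathcomp Require Import all_boot all_order all_algebra.
From mathcomp Require Import all_classical all_reals all_analysis.
From mathcomp Require Import ring lra.
Import Order.TTheory GRing.Theory Num.Theory.
Import numFieldNormedType.Exports.
Local Open Scope classical_set_scope.
Local Open Scope ring_scope.

Section Basic.
Context {R : realType} {J : finType}.
Implicit Types (v w y : J -> R).

Lemma sqnorm_ge0 v : 0 <= sqnorm v.
Proof. by apply: sumr_ge0 => j _; rewrite sqr_ge0. Qed.

Lemma sqnormZ (a : R) v : sqnorm (fun j => a * v j) = a ^+ 2 * sqnorm v.
Proof. rewrite /sqnorm mulr_sumr; apply: eq_bigr => j _; by rewrite exprMn. Qed.

Lemma sqnorm_le v (d : R) : (forall j, `|v j| <= d) -> sqnorm v <= #|J|%:R * d ^+ 2.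
Proof.
move=> H; rewrite /sqnorm.
have -> : #|J|%:R * d ^+ 2 = \sum_(j : J) d ^+ 2 by rewrite sumr_const mulr_natl.
apply: ler_sum => j _; rewrite -real_normK ?num_real //.
have h0 := normr_ge0 (v j); have := H j => h; nra.
Qed.

Lemma sqnorm_small v (e : R) : 0 < e ->
  (forall j, `|v j| <= e / (#|J|%:R + 1)) -> sqnorm v < e ^+ 2.
Proof.
move=> e0 H; have HH := sqnorm_le v _ H. apply: le_lt_trans HH _.
set n := #|J|%:R. have n0 : 0 <= n by rewrite /n ler0n.
have n1 : 0 < n + 1 by lra.
rewrite expr_div_n.
have -> : n * (e ^+ 2 / (n + 1) ^+ 2) = e ^+ 2 * (n / (n+1)^+2) by rewrite mulrCA mulrA.
rewrite -[ltRHS]mulr1 ltr_pM2l ?exprn_gt0 //.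
rewrite ltr_pdivrMr ?exprn_gt0 // mul1r; nra.
Qed.

Lemma min_le2 (a b : R) : Num.min a b <= a /\ Num.min a b <= b.
Proof. by rewrite !ge_min !lexx ?orbT. Qed.

Lemma lt_min2 (c a b : R) : c < a -> c < b -> c < Num.min a b.
Proof. by move=> h1 h2; rewrite lt_min h1 h2. Qed.

End Basic.

Section U.
Context {R : realType} {J : finType} (g : J -> R) (u : (J -> R) -> \bar R).
Context (hinf : forall y, u y != +oo%E) (husc : usc u) (hconc : concave u)
  (hg : forall (y : J -> R) (r : R), dom u y -> 0 < r ->
           (u y < u (fun j => (y j + r * g j)%R))%E).
Implicit Types (y z v w : J -> R) (r a : R).

Lemma fin_u y : dom u y -> u y = (fine (u y))%:E.
Proof. by move=> hy; rewrite fineK // fin_numE hinf andbT gt_eqF. Qed.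

Lemma dom_le y z : dom u y -> (u y <= u z)%E -> dom u z.
Proof. by move=> hy hz; apply: lt_le_trans hz. Qed.

Lemma mono_g y r : dom u y -> 0 <= r -> (u y <= u (fun j => (y j + r * g j)%R))%E.
Proof.
move=> hy; rewrite le_eqVlt => /orP [/eqP <-|r0]; last exact/ltW/hg.
have -> : (fun j => y j + 0 * g j) = y by apply/funext => j; rewrite mul0r addr0.
by [].
Qed.

Lemma rec_transfer {v d : J -> R} {L : R} :
  (forall a, 0 < a -> (L%:E <= u (fun j => (v j + a * d j)%R))%E) ->
  forall w, dom u w -> forall a, 0 < a -> (u w <= u (fun j => (w j + a * d j)%R))%E.
Proof.
move=> HL w hw a a0.
rewrite leNgt; apply/negP => hlt.
set z := (fun j => w j + a * d j) in hlt.
set b := fine (u w).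
have ub : u w = b%:E by apply: fin_u.
have [a' [ha1 ha2]] : exists a', (u z < a'%:E)%E /\ a' < b.
  move: hlt; rewrite ub; case: (u z) => [c||] //= hc.
  - exists ((c + b)/2); rewrite !lte_fin; move: hc; rewrite lte_fin => hc; split; lra.
  - by exists (b - 1); split; [exact: ltNyr | lra].
have [e e0 He] := husc z a' ha1.
set V := sqnorm (fun j => v j - w j).
have V0 : 0 <= V := sqnorm_ge0 _.
set K := b - a'. have K0 : 0 < K by rewrite /K; lra.
set l := Num.min 1 (Num.min (e / (V + 1)) (K / (`|b - L| + 1))).
have [l1 l23] : l <= 1 /\ l <= Num.min (e / (V + 1)) (K / (`|b - L| + 1)) := min_le2 _ _.
have [l2 l3] := min_le2 (e / (V + 1)) (K / (`|b - L| + 1)).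
have l2' := le_trans l23 l2. have l3' := le_trans l23 l3.
have l0 : 0 < l.
  apply: lt_min2; first exact: ltr01.
  have hn := normr_ge0 (b - L).
  apply: lt_min2; apply: divr_gt0; lra.
set x1 := (fun j => v j + (a / l) * d j).
have hx1 : (L%:E <= u x1)%E := HL _ (divr_gt0 a0 l0).
have dx1 : dom u x1 := lt_le_trans (ltNyr L) hx1.
have hl01 : 0 <= l <= 1 by apply/andP; split; lra.
have hc := hconc x1 w l dx1 hw hl01.
set pt := (fun j => l * x1 j + (1 - l) * w j) in hc.
have hpt : sqnorm (fun j => pt j - z j) < e ^+ 2.
  have -> : (fun j => pt j - z j) = (fun j => l * (v j - w j)).
    apply/funext => j; rewrite /pt /x1 /z /=; field.
    by rewrite gt_eqF.
  rewrite sqnormZ -/V.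
  have h1 : l * (V + 1) <= e by rewrite -ler_pdivlMr //; lra.
  have hA : (l * (V + 1)) ^+ 2 <= e ^+ 2.
    rewrite ler_pXn2r // ?nnegrE; nra.
  have hB : l ^+ 2 * V < (l * (V + 1)) ^+ 2.
    rewrite exprMn ltr_pM2l ?exprn_gt0 //; nra.
  exact: lt_le_trans hB hA.
have := He pt hpt.
have := le_lt_trans hc (He pt hpt).
rewrite ub lte_fin /= => hh _.
have fx1 : L <= fine (u x1).
  by move: hx1; rewrite (fin_u _ dx1) lee_fin.
have h3 : l * `|b - L| <= K.
  have : l * (`|b - L| + 1) <= K by rewrite -ler_pdivlMr //; have := normr_ge0 (b - L); lra.
  lra.
have h4 : l * (b - L) <= l * `|b - L| by rewrite ler_pM2l // ler_norm.
rewrite /K in h3; nra.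
Qed.


Definition Sset x y := [set r : R | (u x <= u (fun j => (x j + y j - r * g j)%R))%E].

Lemma D_ub x y r : Sset x y r -> (r%:E <= Dfun u g x y)%E.
Proof. by move=> h; apply: ereal_sup_ubound; exists r. Qed.

Lemma S_dom {x y r} : dom u x -> Sset x y r -> dom u (fun j => (x j + y j - r * g j)%R).
Proof. by move=> hx h; apply: dom_le hx h. Qed.

Lemma D_down {x y r} r' : dom u x -> Sset x y r -> r' <= r -> Sset x y r'.
Proof.
move=> hx h hr; rewrite /Sset /=.
have -> : (fun j => x j + y j - r' * g j) =
          (fun j => (fun j => x j + y j - r * g j) j + (r - r') * g j).
  by apply/funext => j /=; ring.
apply: (le_trans h); apply: mono_g; first exact: S_dom hx h.
by rewrite subr_ge0.
Qed.

Lemma D_lt x y r : dom u x -> (r%:E < Dfun u g x y)%E -> Sset x y r.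
Proof.
move=> hx /ereal_sup_gt [_ [r' hr' <-]]; rewrite lte_fin => hrr.
exact: D_down hx hr' (ltW hrr).
Qed.

Lemma D_zero x : dom u x -> Dfun u g x (fun _ => 0) = 0%E.
Proof.
move=> hx; apply/eqP; rewrite eq_le; apply/andP; split.
- apply: ge_ereal_sup => _ [r hr <-]; rewrite lee_fin leNgt; apply/negP => r0.
  have dy := S_dom hx hr.
  have := hg _ _ dy r0.
  have -> : (fun j => (x j + 0 - r * g j) + r * g j) = x by apply/funext => j; ring.
  by rewrite ltNge hr.
- apply: D_ub; rewrite /Sset /=.
  have -> : (fun j => x j + 0 - 0 * g j) = x by apply/funext => j; ring.
  by [].
Qed.

Lemma D_fin x y : dom u x -> (-oo < Dfun u g x y)%E ->
  exists s, Dfun u g x y = s%:E /\ Sset x y s.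
Proof.
move=> hx; case E: (Dfun u g x y) => [s||] // _.
- exists s; split => //.
  rewrite /Sset /= leNgt; apply/negP => hlt.
  set pt := (fun j => x j + y j - s * g j) in hlt.
  have ux := fin_u _ hx.
  have [e e0 He] : exists2 e : R, 0 < e &
      forall y0, sqnorm (fun j => y0 j - pt j) < e ^+ 2 -> (u y0 < (fine (u x))%:E)%E.
    by apply: husc; rewrite -ux.
  set G := sqnorm g. have G0 : 0 <= G := sqnorm_ge0 g.
  set del := e / (G + 1). have d0 : 0 < del by apply: divr_gt0; lra.
  have h1 : del * (G + 1) = e by rewrite /del mulfVK //; apply/lt0r_neq0; lra.
  clearbody del.
  have hS : Sset x y (s - del) by apply: D_lt => //; rewrite E lte_fin; lra.
  have : sqnorm (fun j => (x j + y j - (s - del) * g j) - pt j) < e ^+ 2.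
    have -> : (fun j => (x j + y j - (s - del) * g j) - pt j) = (fun j => del * g j).
      by apply/funext => j; rewrite /pt; ring.
    rewrite sqnormZ -/G.
    have hA : (del * (G + 1)) ^+ 2 <= e ^+ 2 by rewrite h1.
    have hB : del ^+ 2 * G < (del * (G + 1)) ^+ 2.
      have hd2 : 0 < del ^+ 2 by exact: exprn_gt0.
      have hG : 0 < (G + 1) ^+ 2 - G by nra.
      have := mulr_gt0 hd2 hG; rewrite exprMn; nra.
    exact: lt_le_trans hB hA.
  move=> /He; rewrite -ux => h2.
  by move: hS; rewrite /Sset /= leNgt h2.
- exfalso.
  have Sall : forall r, Sset x y r by move=> r; apply: D_lt => //; rewrite E ltry.
  have HL : forall a, 0 < a -> ((fine (u x))%:E <=
        u (fun j => ((fun j => x j + y j) j + a * (fun j => - g j) j)%R))%E.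
    move=> a a0; rewrite -fin_u //.
    have -> : (fun j => ((fun j => x j + y j) j + a * (fun j => - g j) j)) =
              (fun j => x j + y j - a * g j) by apply/funext => j /=; ring.
    exact: Sall.
  have := rec_transfer HL x hx 1 ltr01.
  set y1 := (fun j => x j + 1 * - g j) => h1.
  have dy1 : dom u y1 := dom_le _ _ hx h1.
  have := hg _ _ dy1 ltr01.
  have -> : (fun j => y1 j + 1 * g j) = x by apply/funext => j; rewrite /y1; ring.
  by rewrite ltNge h1.
Qed.

End U.

Definition sincr (f : nat -> nat) := forall n, (f n < f n.+1)%N.

Lemma sincr_lt f : sincr f -> forall a b, (a < b)%N -> (f a < f b)%N.
Proof.
move=> hf a; elim=> [//|b IH]; rewrite ltnS leq_eqVlt => /orP [/eqP ->|hab].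
  exact: hf.
exact: ltn_trans (IH hab) (hf b).
Qed.

Lemma sincr_ge f : sincr f -> forall n, (n <= f n)%N.
Proof. move=> hf; elim=> [//|n IH]; exact: leq_ltn_trans IH (hf n). Qed.

Lemma near_oo_ex {P : nat -> Prop} : (\forall n \near \oo, P n) -> exists N, forall n, (N <= n)%N -> P n.
Proof. by case=> N _ HN; exists N => n hn; apply: HN. Qed.

Lemma bw_fin (R : realType) (T : finType) (y : nat -> T -> R) (M : R) :
  (forall n k, `|y n k| <= M) ->
  exists l : T -> R, forall e : R, 0 < e -> forall N, exists2 n, (N <= n)%N &
     forall k, `|y n k - l k| < e.
Proof.
move=> hM.
have claim : forall s : seq T, exists f, sincr f /\ exists l : T -> R,
    forall e : R, 0 < e -> exists N0, forall n, (N0 <= n)%N ->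
      forall k, k \in s -> `|y (f n) k - l k| < e.
  elim=> [|k0 s [f [hf [l hl]]]].
    exists id; split; first by move=> n.
    by exists (fun _ => 0) => e e0; exists 0%N.
  have bnd : bounded_fun (fun n => y (f n) k0).
    exists M; split; first exact: num_real.
    move=> z hz n _; exact: le_trans (hM _ _) (ltW hz).
  have [f2 hf2 hc] := bolzano_weierstrass bnd.
  have hf2' : sincr f2 by move/increasing_seqP: hf2.
  have Hl0 := cvgP _ hc; move/cvgrPdist_lt: Hl0 => Hl0.
  set l0 := lim _ in Hl0.
  exists (f \o f2); split.
    by move=> n; exact: sincr_lt _ hf _ _ (hf2' n).
  exists (fun k => if k == k0 then l0 else l k) => e e0.
  have [N1 HN1] := near_oo_ex (Hl0 e e0).
  have [N0 HN0] := hl e e0.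
  exists (maxn N0 N1) => n hn k; rewrite in_cons => /orP [/eqP ->|hk].
    rewrite eqxx distrC; apply: HN1; exact: leq_trans (leq_maxr _ _) hn.
  case: eqP => [->|_].
    rewrite distrC; apply: HN1; exact: leq_trans (leq_maxr _ _) hn.
  apply: HN0 => //=. have h1 : (N0 <= n)%N by apply: leq_trans hn; apply: leq_maxl.
  have h2 := sincr_ge _ hf2' n. exact: leq_trans h1 h2.
have [f [hf [l hl]]] := claim (enum T).
exists l => e e0 N.
have [N0 HN0] := hl e e0.
exists (f (maxn N N0)).
  exact: leq_trans (leq_maxl _ _) (sincr_ge _ hf _).
move=> k; apply: HN0; first exact: leq_maxr.
by rewrite mem_enum.
Qed.


Lemma sum_constR {R : realType} (T : finType) (e : R) : \sum_(i : T) e = #|T|%:R * e.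
Proof. by rewrite sumr_const mulr_natl. Qed.

Section Alloc.
Context {R : realType} {I J : finType}.

Definition snrm (a : I -> J -> R) := \sum_(i : I) \sum_(j : J) `|a i j|.

Lemma snrm_ge0 a : 0 <= snrm a.
Proof. by apply: sumr_ge0 => i _; apply: sumr_ge0 => j _. Qed.

Lemma coord_le_snrm a i j : `|a i j| <= snrm a.
Proof.
rewrite /snrm (bigD1 i) //= (bigD1 j) //= -addrA lerDl.
apply: addr_ge0; first by apply: sumr_ge0 => k _.
by apply: sumr_ge0 => k _; apply: sumr_ge0.
Qed.

Lemma snrm_small a (e : R) : (forall i j, `|a i j| <= e) ->
  snrm a <= #|I|%:R * #|J|%:R * e.
Proof.
move=> h; rewrite /snrm.
have -> : #|I|%:R * #|J|%:R * e = \sum_(i : I) \sum_(j : J) e.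
  by rewrite !sumr_const -mulrA mulr_natl mulr_natl.
by apply: ler_sum => i _; apply: ler_sum => j _.
Qed.

Lemma snrmZr a (c : R) : 0 <= c -> snrm (fun i j => a i j * c) = snrm a * c.
Proof.
move=> c0; rewrite /snrm mulr_suml; apply: eq_bigr => i _.
rewrite mulr_suml; apply: eq_bigr => j _.
by rewrite normrM (ger0_norm c0).
Qed.

Lemma exists_nat_gt (a : R) : exists n : nat, a < n%:R.
Proof.
case: (lerP 0 a) => ha.
  by exists (Num.Def.archi_bound a); apply: archi_boundP.
by exists 0%N.
Qed.

Variables (g : J -> R) (u : I -> (J -> R) -> \bar R).
Hypotheses (hinf : forall i y, u i y != +oo%E) (husc : forall i, usc (u i))
  (hconc : forall i, concave (u i)).
Hypothesis (hA : forall y : I -> J -> R,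
      (forall i (xb : J -> R), dom (u i) xb -> (0 <= recession (u i) xb (y i))%E) ->
      (forall j, \sum_(i : I) y i j = 0) -> y = (fun _ _ => 0)).
Variables (x0 : I -> J -> R).
Hypothesis (x0_dom : forall i, dom (u i) (x0 i)).

Lemma K_bounded (C : R) : exists M : R, forall z : I -> J -> R,
  (forall i, (u i (x0 i) <= u i (z i))%E) ->
  (exists c, 0 <= c <= C /\ forall j, \sum_(i : I) z i j = \sum_(i : I) x0 i j - c * g j) ->
  snrm (fun i j => z i j - x0 i j) <= M.
Proof.
apply: contrapT => H.
have H' : forall n : nat, exists z : I -> J -> R,
   ((forall i, (u i (x0 i) <= u i (z i))%E) /\
   (exists c, 0 <= c <= C /\ forall j, \sum_(i : I) z i j = \sum_(i : I) x0 i j - c * g j)) /\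
   n%:R < snrm (fun i j => z i j - x0 i j).
  move=> n; apply: contrapT => hn; apply: H; exists n%:R => z hz1 hz2.
  rewrite leNgt; apply/negP => hlt; apply: hn; exists z; split => //.
have [zf hzf] := choice H'.
pose N n := snrm (fun i j => zf n i j - x0 i j).
have hN : forall n, n%:R < N n by move=> n; exact: (hzf n).2.
have N0 : forall n, 0 < N n by move=> n; apply: le_lt_trans (hN n); exact: ler0n.
pose dn n i j := (zf n i j - x0 i j) / N n.
have hd1 : forall n i j, `|dn n i j| <= 1.
  move=> n i j; rewrite /dn normrM [`|(N n)^-1|]ger0_norm ?invr_ge0 ?(ltW (N0 n)) //.
  rewrite ler_pdivrMr ?N0 // mul1r; exact: coord_le_snrm (fun i j => zf n i j - x0 i j) i j.
have snd : forall n, snrm (dn n) = 1.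
  move=> n; rewrite /dn snrmZr ?invr_ge0 ?(ltW (N0 n)) //.
  by rewrite mulfV //; apply/lt0r_neq0; exact: N0.
have [l hl] := bw_fin R (I * J)%type (fun n (k : I * J) => dn n k.1 k.2) 1 (fun n k => hd1 n k.1 k.2).
pose dl i j := l (i, j).
have hcl : forall e : R, 0 < e -> forall Nn, exists2 n, (Nn <= n)%N &
    forall i j, `|dn n i j - dl i j| < e.
  move=> e e0 Nn; have [n hn1 hn2] := hl e e0 Nn; exists n => // i j.
  exact: (hn2 (i, j)).
have dl_nz : dl <> (fun _ _ => 0).
  move=> h0; pose c : R := #|I|%:R * #|J|%:R.
  have c0 : 0 <= c by rewrite /c mulr_ge0 // ler0n.
  have ep : 0 < 1 / (c + 1) by apply: divr_gt0; lra.
  have [n _ hn] := hcl (1 / (c + 1)) ep 0%N.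
  have : snrm (dn n) <= c * (1 / (c + 1)).
    apply: snrm_small => i j; apply: ltW; have := hn i j.
    by rewrite h0 subr0.
  rewrite snd mul1r ler_pdivlMr; last lra.
  lra.
have sum0 : forall j, \sum_(i : I) dl i j = 0.
  move=> j.
  have key : forall eps, 0 < eps -> `|\sum_(i : I) dl i j| <= eps.
    move=> eps eps0.
    set a := C * `|g j|.
    have [Nn hNn] := exists_nat_gt (2 * a / eps).
    set e := eps / (2 * (#|I|%:R + 1)).
    have e0 : 0 < e by apply: divr_gt0 => //; have := ler0n R #|I|; lra.
    have [n hn1 hn2] := hcl e e0 Nn.
    have [[_ [c [hc hcs]]] _] := hzf n.
    have hsd : \sum_(i : I) dn n i j = - (c * g j) / N n.
      rewrite /dn -mulr_suml sumrB hcs; congr (_ / _); ring.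
    have ha : `|c * g j| <= a.
      rewrite normrM /a ger0_norm; last by case/andP: hc.
      by apply: ler_wpM2r => //; case/andP: hc.
    have hb : `|\sum_(i : I) dn n i j| <= eps / 2.
      rewrite hsd normrM normrN ger0_norm ?invr_ge0 ?(ltW (N0 n)) //.
      rewrite ler_pdivrMr ?N0 //.
      apply: le_trans ha _.
      have h1 : (Nn <= n)%N := hn1.
      have h2 : (Nn%:R : R) <= n%:R by rewrite ler_nat.
      have h3 := hN n.
      have h4 : 2 * a < eps * Nn%:R by rewrite -ltr_pdivrMl // mulrC.
      have a0 : 0 <= a by rewrite /a mulr_ge0 ?normr_ge0 //; case/andP: hc => hc1 hc2; lra.
      nra.
    have hc2 : `|\sum_(i : I) dl i j - \sum_(i : I) dn n i j| <= eps / 2.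
      rewrite -sumrB; apply: le_trans (ler_norm_sum _ _ _) _.
      apply: le_trans (_ : \sum_(i : I) e <= _).
        by apply: ler_sum => i _; rewrite distrC; exact: ltW.
      rewrite sum_constR /e.
      have hI := ler0n R #|I|.
      rewrite mulrA ler_pdivrMr; last lra.
      nra.
    have := ler_normD (\sum_(i : I) dl i j - \sum_(i : I) dn n i j) (\sum_(i : I) dn n i j).
    rewrite subrK => h; apply: le_trans h _; lra.
  apply/eqP; rewrite -normr_le0; apply/unstable.ler_gtP => z z0.
  exact: key.
have rec_i : forall i a, 0 < a ->
    ((fine (u i (x0 i)))%:E <= u i (fun j => (x0 i j + a * dl i j)%R))%E.
  move=> i a a0; rewrite leNgt; apply/negP => hlt.
  set b := fine (u i (x0 i)) in hlt.
  have ub : u i (x0 i) = b%:E by apply: fin_u.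
  set zz := (fun j => x0 i j + a * dl i j) in hlt.
  have [e e0 He] := husc i zz b hlt.
  have [Nn hNn] := exists_nat_gt a.
  set e' := e / (#|J|%:R + 1) / a.
  have e'0 : 0 < e'.
    by apply: divr_gt0 => //; apply: divr_gt0 => //; have := ler0n R #|J|; lra.
  have [n hn1 hn2] := hcl e' e'0 Nn.
  set pt := (fun j => x0 i j + a * dn n i j).
  have hpt : sqnorm (fun j => pt j - zz j) < e ^+ 2.
    apply: sqnorm_small => // j.
    have -> : pt j - zz j = a * (dn n i j - dl i j) by rewrite /pt /zz; ring.
    rewrite normrM gtr0_norm //.
    have := hn2 i j; rewrite /e' => h.
    rewrite -ler_pdivlMl // mulrC; exact: ltW.
  have := He pt hpt => hlt2.
  have [[hz1 _] _] := hzf n.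
  have dz : dom (u i) (zf n i) := dom_le _ _ _ (x0_dom i) (hz1 i).
  set lam := a / N n.
  have lam0 : 0 < lam by apply: divr_gt0 => //; exact: N0.
  have lam1 : lam <= 1.
    rewrite /lam ler_pdivrMr ?N0 // mul1r.
    have h1 : (Nn%:R : R) <= n%:R by rewrite ler_nat.
    have := hN n; lra.
  have hl01 : 0 <= lam <= 1 by apply/andP; split => //; exact: ltW.
  have hc := hconc i (zf n i) (x0 i) lam dz (x0_dom i) hl01.
  have ept : (fun j => lam * zf n i j + (1 - lam) * x0 i j) = pt.
    apply/funext => j; rewrite /pt /lam /dn; field.
    by apply/lt0r_neq0; exact: N0.
  rewrite ept in hc.
  have fz : b <= fine (u i (zf n i)).
    move: (hz1 i); rewrite ub; set q := u i (zf n i); have -> : q = (fine q)%:E by apply: fin_u.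
    by rewrite lee_fin.
  have := le_lt_trans hc hlt2; rewrite -/b lte_fin => hh.
  have h5 : 0 <= lam * (fine (u i (zf n i)) - b) by apply: mulr_ge0; [exact: ltW | rewrite subr_ge0].
  move: hh h5; set f := fine (u i (zf n i)); clearbody f lam b => hh h5.
  have : lam * f + (1 - lam) * b = b + lam * (f - b) by ring.
  lra.
have recA : forall i (xb : J -> R), dom (u i) xb -> (0 <= recession (u i) xb (dl i))%E.
  move=> i xb hxb.
  have ht := rec_transfer (u i) (hinf i) (husc i) (hconc i) (rec_i i) xb hxb.
  rewrite /recession; apply: le_ereal_inf_tmp => _ [a a0 <-].
  apply: mule_ge0; last by rewrite lee_fin invr_ge0; exact: ltW.
  rewrite sube_ge0; first exact: ht.
  by rewrite (fin_u _ _ _ hxb).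
exact: dl_nz (hA _ recA sum0).
Qed.

End Alloc.


Lemma dotp_sum {R : realType} {I J : finType} (pp : J -> R) (a : I -> J -> R) :
  \sum_(i : I) dotp pp (a i) = dotp pp (fun j => \sum_(i : I) a i j).
Proof.
rewrite /dotp exchange_big /=; apply: eq_bigr => j _; by rewrite mulr_sumr.
Qed.

Lemma dotp0 {R : realType} {J : finType} (pp : J -> R) : dotp pp (fun _ => 0) = 0.
Proof. by rewrite /dotp big1 // => j _; rewrite mulr0. Qed.

Theorem theorem6p3 (R : realType) (I J : finType) (g : J -> R)
  (u : I -> (J -> R) -> \bar R)
  (x0 : I -> J -> R)
  (x : nat -> I -> J -> R) (xbar : nat -> I -> J -> R) (p : nat -> J -> R)
  (* u_i : R^J -> R \cup {-oo}, upper semicontinuous, concave *)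
  (u_noinf : forall i y, u i y != +oo%E)
  (u_usc : forall i, usc (u i))
  (u_conc : forall i, concave (u i))
  (* strict monotonicity along g *)
  (u_g : forall i (y : J -> R) (r : R), dom (u i) y -> 0 < r ->
           (u i y < u i (fun j => (y j + r * g j)%R))%E)
  (* assumption (A) *)
  (hypA : forall y : I -> J -> R,
      (forall i (xb : J -> R), dom (u i) xb -> (0 <= recession (u i) xb (y i))%E) ->
      (forall j, \sum_(i : I) y i j = 0) -> y = (fun _ _ => 0))
  (* assumption (B) *)
  (hypB : forall r : R, 0 < r -> forall i, exists2 d : R, 0 < d &
      forall y : J -> R, inball r y ->
        (u i y + (d * r)%:E <= u i (fun j => (y j + r * g j)%R))%E)
  (* initial allocation (in the domain of the utilities) *)
  (x0_dom : forall i, dom (u i) (x0 i))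
  (x_0 : x 0%N = x0)
  (* repeated double auctions *)
  (xbar_feas : forall t, (1 <= t)%N -> forall j, \sum_(i : I) xbar t i j = 0)
  (xbar_opt : forall t, (1 <= t)%N -> forall y : I -> J -> R,
      (forall j, \sum_(i : I) y i j = 0) ->
      (\sum_(i : I) Dfun (u i) g (x t.-1 i) (y i)
         <= \sum_(i : I) Dfun (u i) g (x t.-1 i) (xbar t i))%E)
  (p_sup : forall t, (1 <= t)%N -> forall i,
      superdiff (Dfun (u i) g (x t.-1 i)) (xbar t i) (p t))
  (x_step : forall t, (1 <= t)%N -> forall i j,
      x t i j = x t.-1 i j + xbar t i j - dotp (p t) (xbar t i) * g j) :
  (* the sequence is bounded *)
  (exists M : R, forall t i j, `|x t i j| <= M) /\
  (* CS(x^t) is nonincreasing and converges to 0 *)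
  (forall t, (CS u g (x t.+1) <= CS u g (x t))%E) /\
  ((fun t => CS u g (x t)) @ \oo --> 0%E) /\
  (* rate *)
  (exists2 r : R, 0 < r &
     forall d : I -> R,
       (forall i, 0 < d i /\ forall y : J -> R, inball r y ->
          (u i y + (d i * r)%:E <= u i (fun j => (y j + r * g j)%R))%E) ->
       forall t, (1 <= t)%N ->
         (CS u g (x t) <= (t%:R^-1)%:E *
            \sum_(i : I) ((u i (x t i) - u i (x0 i)) * ((d i)^-1)%:E))%E) /\
  (* cluster points are equilibria and individually rational *)
  (forall xb, cluster_point x xb ->
     DA_equilibrium u g xb /\ individually_rational u x0 xb) /\
  (* Pareto efficiency under the extra domain condition *)
  ((forall i (y : J -> R),
      (exists2 y' : J -> R, dom (u i) y' & (u i y' < u i y)%E) ->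
      exists2 e0 : R, 0 < e0 &
        forall e : R, 0 < e -> e < e0 -> dom (u i) (fun j => y j - e * g j)) ->
   forall xb, cluster_point x xb -> pareto_efficient u x0 xb).

Proof.
have fin_ui : forall i y, dom (u i) y -> u i y = (fine (u i y))%:E.
  by move=> i; apply: fin_u.
pose Dv t i := fine (Dfun (u i) g (x t i) (xbar t.+1 i)).
pose q t i := dotp (p t.+1) (xbar t.+1 i).
pose ym t i := fun j => x t i j + xbar t.+1 i j - Dv t i * g j.
have stepD : forall t, (forall i, dom (u i) (x t i)) -> forall i,
   [/\ Dfun (u i) g (x t i) (xbar t.+1 i) = (Dv t i)%:E,
       Sset g (u i) (x t i) (xbar t.+1 i) (Dv t i) & q t i <= Dv t i].
  move=> t hd i.
  have hs := p_sup t.+1 (ltn0Sn t) i (fun _ => 0).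
  rewrite /= (D_zero g (u i) (u_g i) (x t i) (hd i)) in hs.
  have e1 : dotp (p t.+1) (fun j => 0 - xbar t.+1 i j) = - q t i.
    by rewrite /dotp /q -sumrN; apply: eq_bigr => j _; ring.
  rewrite e1 in hs.
  have hfin : (-oo < Dfun (u i) g (x t i) (xbar t.+1 i))%E.
    by rewrite ltNye; apply/negP => /eqP hE; move: hs; rewrite hE.
  have [s [Es Ss]] := D_fin g (u i) (u_noinf i) (u_usc i) (u_conc i) (u_g i) _ _ (hd i) hfin.
  rewrite /Dv Es /=; split => //.
  by move: hs; rewrite Es -EFinD lee_fin => hs; lra.
have xs : forall t i j, x t.+1 i j = ym t i j + (Dv t i - q t i) * g j.
  by move=> t i j; rewrite x_step //= /ym /q; ring.
have xsf : forall t i, x t.+1 i = (fun j => ym t i j + (Dv t i - q t i) * g j).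
  by move=> t i; apply/funext => j; exact: xs.
have mono_step : forall t, (forall i, dom (u i) (x t i)) -> forall i,
    (u i (x t i) <= u i (ym t i))%E /\ (u i (ym t i) <= u i (x t.+1 i))%E.
  move=> t hd i; have [_ hS hq] := stepD t hd i; split; first exact: hS.
  rewrite xsf; apply: mono_g; first exact: u_g.
    exact: dom_le _ _ _ (hd i) hS.
  by rewrite subr_ge0.
have domall : forall t i, dom (u i) (x t i).
  elim=> [|t IH] i; first by rewrite x_0.
  have [h1 h2] := mono_step t IH i.
  exact: dom_le _ _ _ (IH i) (le_trans h1 h2).
have monou : forall t i, (u i (x t i) <= u i (x t.+1 i))%E.
  by move=> t i; have [h1 h2] := mono_step t (domall t) i; exact: le_trans h1 h2.
have monou2 : forall s t, (s <= t)%N -> forall i, (u i (x s i) <= u i (x t i))%E.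
  move=> s; elim=> [|t IH]; first by rewrite leqn0 => /eqP -> i.
  rewrite leq_eqVlt => /orP [/eqP -> //|hst] i.
  exact: le_trans (IH hst i) (monou t i).
have ir0 : forall t i, (u i (x0 i) <= u i (x t i))%E.
  by move=> t i; rewrite -x_0; apply: monou2.
have stD := fun t i => stepD t (domall t) i.
have ymdom : forall t i, dom (u i) (ym t i).
  by move=> t i; exact: dom_le _ _ _ (domall t i) (mono_step t (domall t) i).1.
have sumq : forall t, \sum_(i : I) q t i = 0.
  move=> t; rewrite /q dotp_sum.
  have -> : (fun j => \sum_(i : I) xbar t.+1 i j) = (fun _ => 0).
    by apply/funext => j; exact: xbar_feas.
  exact: dotp0.
pose cs t := \sum_(i : I) Dv t i.
have feas : forall t j, \sum_(i : I) x t i j = \sum_(i : I) x0 i j.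
  move=> t j; elim: t => [|t IH]; first by rewrite x_0.
  rewrite -IH.
  under eq_bigr do rewrite xs /ym.
  rewrite big_split /= sumrB big_split /= -!mulr_suml xbar_feas // sumrB sumq.
  by rewrite -/(cs t); ring.
have sumym : forall t j, \sum_(i : I) ym t i j = \sum_(i : I) x0 i j - cs t * g j.
  move=> t j; rewrite /ym sumrB big_split /= -mulr_suml xbar_feas // feas.
  by rewrite addr0.
have csE : forall t, CS u g (x t) = (cs t)%:E.
  move=> t; rewrite /CS; apply/eqP; rewrite eq_le; apply/andP; split.
  - apply: ge_ereal_sup => _ [y hy <-].
    have := xbar_opt t.+1 (ltn0Sn t) y hy; rewrite /=.
    suff -> : \sum_(i : I) Dfun (u i) g (x t i) (xbar t.+1 i) = (cs t)%:E by [].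
    by rewrite /cs -sumEFin; apply: eq_bigr => i _; case: (stD t i) => -> _ _.
  - apply: ereal_sup_ubound; exists (xbar t.+1) => /=.
      by move=> j; exact: xbar_feas.
    by rewrite /cs -sumEFin; apply: eq_bigr => i _; case: (stD t i) => -> _ _.
have cs0 : forall t, 0 <= cs t.
  move=> t; rewrite -lee_fin -csE; apply: ereal_sup_ubound.
  exists (fun _ _ => 0) => /=; first by move=> j; rewrite big1.
  by rewrite big1 // => i _; rewrite D_zero //; exact: u_g.

have csmono : forall t, cs t.+1 <= cs t.
  move=> t; rewrite -lee_fin -csE; apply: ge_ereal_sup => _ [y hy <-].
  have hi : forall i, (Dfun (u i) g (x t.+1 i) (y i) <=
      (Dv t i + dotp (p t.+1) (y i) - q t i)%:E)%E.
    move=> i; apply: ge_ereal_sup => _ [r hr <-]; rewrite lee_fin.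
    pose z := fun j => xbar t.+1 i j + y i j.
    have hS : Sset g (u i) (x t i) z (r + q t i).
      rewrite /Sset /=; apply: le_trans (monou t i) _; move: hr; rewrite /Sset /=.
      have -> : (fun j => x t i j + z j - (r + q t i) * g j) =
                (fun j => x t.+1 i j + y i j - r * g j).
        by apply/funext => j; rewrite xs /ym /z; ring.
      by [].
    have h1 := D_ub g (u i) _ _ _ hS.
    have h2 := p_sup t.+1 (ltn0Sn t) i z; rewrite /= in h2.
    have e2 : dotp (p t.+1) (fun j => z j - xbar t.+1 i j) = dotp (p t.+1) (y i).
      by rewrite /dotp; apply: eq_bigr => j _; rewrite /z; congr (_ * _); ring.
    rewrite e2 in h2; case: (stD t i) => hD _ _; rewrite hD -EFinD in h2.
    have := le_trans h1 h2; rewrite lee_fin => h3.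
    rewrite /q; rewrite /q in h3; lra.
  apply: le_trans; first by apply: lee_sum => i _; exact: hi i.
  rewrite sumEFin lee_fin sumrB big_split /= dotp_sum sumq.
  have -> : (fun j => \sum_(i : I) y i j) = (fun _ => 0) by apply/funext => j; exact: hy.
  by rewrite dotp0 addr0 subr0.
have cs_anti : forall s t, (s <= t)%N -> cs t <= cs s.
  move=> s; elim=> [|t IH]; first by rewrite leqn0 => /eqP ->.
  rewrite leq_eqVlt => /orP [/eqP -> //|hst].
  exact: le_trans (csmono t) (IH hst).
have [M hM] := K_bounded g u u_noinf u_usc u_conc hypA x0 x0_dom (cs 0%N).
pose Mb := snrm x0 + M.
have bnd : forall z : I -> J -> R, (forall i, (u i (x0 i) <= u i (z i))%E) ->
    (exists c, 0 <= c <= cs 0%N /\ forall j, \sum_(i : I) z i j = \sum_(i : I) x0 i j - c * g j) ->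
    forall i j, `|z i j| <= Mb.
  move=> z h1 h2 i j; have := hM z h1 h2 => h3.
  have h4 := coord_le_snrm x0 i j.
  have h5 := coord_le_snrm (fun i j => z i j - x0 i j) i j.
  have -> : z i j = x0 i j + (z i j - x0 i j) by ring.
  apply: le_trans (ler_normD _ _) _; rewrite /Mb; lra.
have xbnd : forall t i j, `|x t i j| <= Mb.
  move=> t; apply: bnd; first exact: ir0.
  exists 0; split; first by rewrite lexx cs0.
  by move=> j; rewrite feas mul0r subr0.
have ybnd : forall t i j, `|ym t i j| <= Mb.
  move=> t; apply: bnd.
    by move=> i; apply: le_trans (ir0 t i) (mono_step t (domall t) i).1.
  exists (cs t); split; last exact: sumym.
  by rewrite cs0 cs_anti.
have Mb0 : 0 <= Mb.
  have hx0 : snrm (fun i j => x0 i j - x0 i j) <= M.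
    apply: hM; first by move=> i.
    exists 0; split; [by rewrite lexx cs0 | by move=> j; rewrite mul0r subr0].
  have := snrm_ge0 x0; have := snrm_ge0 (fun i j => x0 i j - x0 i j).
  rewrite /Mb; lra.

pose sv t i := Dv t i - q t i.
have sv0 : forall t i, 0 <= sv t i.
  by move=> t i; rewrite /sv subr_ge0; case: (stD t i).
have sumsv : forall t, \sum_(i : I) sv t i = cs t.
  by move=> t; rewrite /sv sumrB sumq subr0.
have svle : forall t i, sv t i <= cs 0%N.
  move=> t i; apply: le_trans (cs_anti 0%N t (leq0n t)).
  rewrite -sumsv (bigD1 i) //= lerDl; apply: sumr_ge0 => k _; exact: sv0.
pose r := (#|J|%:R + 1) * (Mb + 1) + cs 0%N.
have hn : 0 <= (#|J|%:R : R) := ler0n R #|J|.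
have hA0 : 0 <= (#|J|%:R + 1) * (Mb + 1) by apply: mulr_ge0; lra.
have r0 : 0 < r.
  have := cs0 0%N; have : 0 < (#|J|%:R + 1) * (Mb + 1) by apply: mulr_gt0; lra.
  rewrite /r; lra.
have ymball : forall t i, inball r (ym t i).
  move=> t i; rewrite /inball; apply: le_trans (sqnorm_le (ym t i) Mb (ybnd t i)) _.
  have h1 : (#|J|%:R : R) <= (#|J|%:R + 1) ^+ 2 by nra.
  have h2 : Mb ^+ 2 <= (Mb + 1) ^+ 2 by nra.
  have h3 : #|J|%:R * Mb ^+ 2 <= (#|J|%:R + 1) ^+ 2 * (Mb + 1) ^+ 2.
    apply: ler_pM => //; exact: sqr_ge0.
  rewrite -exprMn in h3; apply: le_trans h3 _.
  have := cs0 0%N; rewrite /r => hc; nra.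
have rstep : forall d : I -> R, (forall i, 0 < d i /\ forall y : J -> R, inball r y ->
      (u i y + (d i * r)%:E <= u i (fun j => (y j + r * g j)%R))%E) ->
    forall t i, fine (u i (x t i)) + d i * sv t i <= fine (u i (x t.+1 i)).
  move=> d hd t i.
  have [d0 hB] := hd i.
  have hB1 := hB (ym t i) (ymball t i).
  have dX : dom (u i) (fun j => ym t i j + r * g j).
    apply: dom_le _ _ _ (ymdom t i) _; apply: mono_g; [exact: u_g | exact: ymdom | exact: ltW].
  pose lam := sv t i / r.
  have hl01 : 0 <= lam <= 1.
    apply/andP; split; first by apply: divr_ge0; [exact: sv0 | exact: ltW].
    rewrite /lam ler_pdivrMr // mul1r; apply: le_trans (svle t i) _; rewrite /r; lra.
  have hc := u_conc i _ _ lam dX (ymdom t i) hl01.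
  have ept : (fun j => lam * (ym t i j + r * g j) + (1 - lam) * ym t i j) = x t.+1 i.
    apply/funext => j; rewrite xs /lam /sv; field; exact: lt0r_neq0.
  rewrite ept (fin_ui _ _ (domall t.+1 i)) lee_fin in hc.
  move: hB1; rewrite (fin_ui _ _ (ymdom t i)) (fin_ui _ _ dX) -EFinD lee_fin => hB1.
  have fx : fine (u i (x t i)) <= fine (u i (ym t i)).
    have := (mono_step t (domall t) i).1.
    by rewrite (fin_ui _ _ (domall t i)) (fin_ui _ _ (ymdom t i)) lee_fin.
  set fX := fine (u i (fun j => ym t i j + r * g j)) in hB1 hc.
  set fy := fine (u i (ym t i)) in hB1 hc fx.
  have e3 : lam * (fy + d i * r) + (1 - lam) * fy = fy + d i * sv t i.
    by rewrite /lam; field; exact: lt0r_neq0.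
  have e4 : lam * (fy + d i * r) <= lam * fX by apply: ler_wpM2l; [case/andP: hl01 | ].
  lra.
pose U t i := fine (u i (x t i)).
have tele : forall d : I -> R, (forall i, 0 < d i /\ forall y : J -> R, inball r y ->
      (u i y + (d i * r)%:E <= u i (fun j => (y j + r * g j)%R))%E) ->
    forall T, T%:R * cs T <= \sum_(i : I) (U T i - U 0%N i) / d i.
  move=> d hd T.
  have h1 : forall T, \sum_(s < T) cs s <= \sum_(i : I) (U T i - U 0%N i) / d i.
    elim=> [|T' IH]; first by rewrite big_ord0 big1 // => i _; rewrite subrr mul0r.
    rewrite big_ord_recr /=.
    have -> : \sum_(i : I) (U T'.+1 i - U 0%N i) / d i =
              \sum_(i : I) (U T' i - U 0%N i) / d i + \sum_(i : I) (U T'.+1 i - U T' i) / d i.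
      by rewrite -big_split /=; apply: eq_bigr => i _; rewrite -mulrDl; congr (_ * _); ring.
    apply: lerD => //; rewrite -sumsv; apply: ler_sum => i _.
    have [d0 _] := hd i.
    rewrite ler_pdivlMr //; have := rstep d hd T' i; rewrite /U; lra.
  apply: le_trans (h1 T).
  have -> : T%:R * cs T = \sum_(s < T) cs T by rewrite sum_constR card_ord.
  by apply: ler_sum => s _; apply: cs_anti; exact: ltnW.

have clu_le : forall xb, cluster_point x xb -> forall t i, (u i (x t i) <= u i (xb i))%E.
  move=> xb hcl t i; rewrite leNgt; apply/negP => hlt.
  have hlt' : (u i (xb i) < (U t i)%:E)%E by rewrite /U -fin_ui //; exact: domall.
  have [e e0 He] := u_usc i (xb i) (U t i) hlt'.
  have e'0 : 0 < e / (#|J|%:R + 1) by apply: divr_gt0 => //; lra.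
  have [t' ht' hc] := hcl _ e'0 t.
  have hsq : sqnorm (fun j => x t' i j - xb i j) < e ^+ 2.
    by apply: sqnorm_small => // j; exact: ltW (hc i j).
  have := He (x t' i) hsq.
  rewrite /U -fin_ui; last exact: domall.
  by rewrite ltNge (monou2 t t' ht' i).
have [xc hxc] := bw_fin R (I * J)%type (fun n k => x n k.1 k.2) Mb (fun n k => xbnd n k.1 k.2).
have clxc : cluster_point x (fun i j => xc (i, j)).
  by move=> e e0 N; have [n hn1 h] := hxc e e0 N; exists n => // i j; exact: h (i, j).
pose xc' i j := xc (i, j).
pose ub i := fine (u i (xc' i)).
have Ule : forall t i, U t i <= ub i.
  move=> t i; have h := clu_le _ clxc t i.
  have dxc : dom (u i) (xc' i) := dom_le _ _ _ (domall t i) h.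
  by move: h; rewrite /U /ub (fin_ui _ _ (domall t i)) (fin_ui _ _ dxc) lee_fin.
have [d hd] : exists d : I -> R, forall i, 0 < d i /\ forall y : J -> R, inball r y ->
      (u i y + (d i * r)%:E <= u i (fun j => (y j + r * g j)%R))%E.
  have H : forall i, exists di : R, 0 < di /\ forall y : J -> R, inball r y ->
      (u i y + (di * r)%:E <= u i (fun j => (y j + r * g j)%R))%E.
    by move=> i; have [di h1 h2] := hypB r r0 i; exists di.
  have [d hd] := choice H; by exists d.
pose B' := \sum_(i : I) (ub i - U 0%N i) / d i.
have csbound : forall T, T%:R * cs T <= B'.
  move=> T; apply: le_trans (tele d hd T) _; apply: ler_sum => i _.
  have [d0 _] := hd i.
  apply: ler_wpM2r; first by rewrite invr_ge0; exact: ltW.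
  by have := Ule T i; lra.
have B'0 : 0 <= B' by have := csbound 0%N; rewrite mul0r.
have cs_small : forall eps, 0 < eps -> exists N, forall T, (N <= T)%N -> cs T < eps.
  move=> eps eps0; have [N hN] := exists_nat_gt (B' / eps).
  exists N => T hT.
  have hT' : B' / eps < T%:R by apply: lt_le_trans hN _; rewrite ler_nat.
  rewrite ltr_pdivrMr // in hT'.
  have h0 : 0 < T%:R * eps := le_lt_trans B'0 hT'.
  have T0 : 0 < (T%:R : R) by rewrite -(pmulr_lgt0 _ eps0).
  have := csbound T => h.
  rewrite -(ltr_pM2l T0); lra.
have clfacts : forall xb, cluster_point x xb ->
    [/\ (forall i, dom (u i) (xb i)), feasible x0 xb,
        individually_rational u x0 xb & CS u g xb = 0%E].
  move=> xb hcl.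
  have hle := clu_le xb hcl.
  have xbdom : forall i, dom (u i) (xb i) by move=> i; exact: dom_le _ _ _ (domall 0%N i) (hle 0%N i).
  have feasxb : forall j, \sum_(i : I) xb i j = \sum_(i : I) x0 i j.
    move=> j; apply/eqP; rewrite -subr_eq0 -normr_le0; apply/unstable.ler_gtP => eps eps0.
    have hI := ler0n R #|I|.
    have e0 : 0 < eps / (#|I|%:R + 1) by apply: divr_gt0 => //; lra.
    have [t _ hc] := hcl _ e0 0%N.
    rewrite -(feas t j) -sumrB; apply: le_trans (ler_norm_sum _ _ _) _.
    apply: le_trans (_ : \sum_(i : I) (eps / (#|I|%:R + 1)) <= _).
      by apply: ler_sum => i _; rewrite distrC; exact: ltW (hc i j).
    rewrite sum_constR mulrA ler_pdivrMr; last lra.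
    nra.
  split => //.
    by move=> i; have := hle 0%N i; rewrite x_0.
  have D0 : forall i, Dfun (u i) g (xb i) (fun _ => 0) = 0%E.
    by move=> i; apply: D_zero; [exact: u_g | exact: xbdom].
  apply/eqP; rewrite eq_le; apply/andP; split; last first.
    apply: ereal_sup_ubound; exists (fun _ _ => 0) => /=.
      by move=> j; rewrite big1.
    by rewrite big1.
  apply: ge_ereal_sup => _ [y hy <-].
  case: (pselect (exists i, Dfun (u i) g (xb i) (y i) = -oo%E)) => [[i hi]|hno].
    have -> : \sum_(i0 : I) Dfun (u i0) g (xb i0) (y i0) = -oo%E.
      by apply/esum_eqNyP; exists i; split => //; exact: mem_index_enum.
    exact: leNye.
  have hfin : forall i, (-oo < Dfun (u i) g (xb i) (y i))%E.
    by move=> i; rewrite ltNye; apply/eqP => hE; apply: hno; exists i.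
  pose rv i := fine (Dfun (u i) g (xb i) (y i)).
  have hrv : forall i, Dfun (u i) g (xb i) (y i) = (rv i)%:E /\ Sset g (u i) (xb i) (y i) (rv i).
    move=> i; have [s0 [Es Ss]] := D_fin g (u i) (u_noinf i) (u_usc i) (u_conc i) (u_g i) _ _ (xbdom i) (hfin i).
    by rewrite /rv Es.
  have -> : \sum_(i : I) Dfun (u i) g (xb i) (y i) = (\sum_(i : I) rv i)%:E.
    by rewrite -sumEFin; apply: eq_bigr => i _; exact: (hrv i).1.
  rewrite lee_fin leNgt; apply/negP => hpos.
  have [N hN] := cs_small _ hpos.
  pose y' i j := y i j + xb i j - x N i j.
  have hy' : forall j, \sum_(i : I) y' i j = 0.
    by move=> j; rewrite /y' sumrB big_split /= hy feasxb feas add0r subrr.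
  have hS : forall i, Sset g (u i) (x N i) (y' i) (rv i).
    move=> i; rewrite /Sset /=; apply: le_trans (hle N i) _.
    have := (hrv i).2; rewrite /Sset /=.
    have -> : (fun j => x N i j + y' i j - rv i * g j) = (fun j => xb i j + y i j - rv i * g j).
      by apply/funext => j; rewrite /y'; ring.
    by [].
  have : ((\sum_(i : I) rv i)%:E <= CS u g (x N))%E.
    apply: (@le_trans _ _ (\sum_(i : I) Dfun (u i) g (x N i) (y' i))).
      by rewrite -sumEFin; apply: lee_sum => i _; exact: D_ub (hS i).
    by apply: ereal_sup_ubound; exists y'.
  rewrite csE lee_fin => h; have := hN N (leqnn N); lra.
split.
  by exists Mb; exact: xbnd.
split.
  by move=> t; rewrite !csE lee_fin; exact: csmono.
split.
  have -> : (fun t => CS u g (x t)) = (fun t => (cs t)%:E) by apply/funext => t; exact: csE.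
  apply: cvg_EFin; first by apply: nearW => t.
  apply/cvgrPdist_lt => eps eps0; have [N hN] := cs_small eps eps0.
  exists N => // T hT; rewrite /= sub0r normrN ger0_norm //; exact: hN.
split.
  exists r => // d' hd' t ht.
  rewrite csE.
  have -> : \sum_(i : I) ((u i (x t i) - u i (x0 i)) * ((d' i)^-1)%:E)%E =
            (\sum_(i : I) (U t i - U 0%N i) / d' i)%:E.
    rewrite -sumEFin; apply: eq_bigr => i _.
    rewrite /U x_0 (fin_ui _ _ (domall t i)) (fin_ui _ _ (x0_dom i)) -EFinB -EFinM.
    by [].
  rewrite -EFinM lee_fin ler_pdivlMl ?ltr0n //; exact: tele d' hd' t.
split.
  by move=> xb hcl; have [_ _ hir heq] := clfacts xb hcl.
move=> hext xb hcl; have [xbdom hfeas _ heq] := clfacts xb hcl.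
split => //.
move=> [x' [hf' [hge [k hk]]]].
pose y i j := x' i j - xb i j.
have hy : forall j, \sum_(i : I) y i j = 0.
  by move=> j; rewrite /y sumrB hf' hfeas subrr.
have x'dom : forall i, dom (u i) (x' i) by move=> i; exact: dom_le _ _ _ (xbdom i) (hge i).
have nonneg : forall i, (0 <= Dfun (u i) g (xb i) (y i))%E.
  move=> i; apply: D_ub; rewrite /Sset /=.
  have -> : (fun j => xb i j + y i j - 0 * g j) = x' i by apply/funext => j; rewrite /y; ring.
  exact: hge i.
have [rho [rho0 hrho]] : exists rho, 0 < rho /\ Sset g (u k) (xb k) (y k) rho.
  have [e0 e00 he] := hext k (x' k) (ex_intro2 _ _ (xb k) (xbdom k) hk).
  pose eps := e0 / 2.
  have eps0 : 0 < eps by rewrite /eps; lra.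
  have epslt : eps < e0 by rewrite /eps; lra.
  have dw := he eps eps0 epslt.
  set w := (fun j => x' k j - eps * g j) in dw.
  pose A := fine (u k (x' k)). pose B := fine (u k (xb k)). pose W := fine (u k w).
  have AB : B < A by move: hk; rewrite (fin_ui _ _ (xbdom k)) (fin_ui _ _ (x'dom k)) lte_fin.
  pose lam := Num.min 1 ((A - B) / (`|A - W| + 1)).
  have hnw := normr_ge0 (A - W).
  have [l1 l2] : lam <= 1 /\ lam <= (A - B) / (`|A - W| + 1) := min_le2 _ _.
  have l0 : 0 < lam by apply: lt_min2; [exact: ltr01 | apply: divr_gt0; lra].
  have hl01 : 0 <= lam <= 1 by apply/andP; split; [exact: ltW | exact: l1].
  have hc := u_conc k w (x' k) lam dw (x'dom k) hl01.
  exists (lam * eps); split; first exact: mulr_gt0.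
  rewrite /Sset /=.
  have -> : (fun j => xb k j + y k j - lam * eps * g j) = (fun j => lam * w j + (1 - lam) * x' k j).
    by apply/funext => j; rewrite /y /w; ring.
  apply: le_trans hc; rewrite (fin_ui _ _ (xbdom k)) lee_fin -/A -/B -/W.
  have h3 : lam * `|A - W| <= A - B.
    have : lam * (`|A - W| + 1) <= A - B by rewrite -ler_pdivlMr //; lra.
    lra.
  have h4 : lam * (A - W) <= lam * `|A - W| by rewrite ler_pM2l // ler_norm.
  have : lam * W + (1 - lam) * A = A - lam * (A - W) by ring.
  lra.
have hsum : (rho%:E <= \sum_(i : I) Dfun (u i) g (xb i) (y i))%E.
  rewrite (bigD1 k) //=; apply: le_trans (D_ub g (u k) _ _ _ hrho) _.
  by apply: leeDl; apply: sume_ge0 => i _; exact: nonneg.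
have : (\sum_(i : I) Dfun (u i) g (xb i) (y i) <= CS u g xb)%E.
  by apply: ereal_sup_ubound; exists y.
rewrite heq => h; have := le_trans hsum h; rewrite lee_fin; lra.
Qed.
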